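(* Fix a finite relational vocabulary $\sigma$ and integers $n,d\ge 0$. In the generalized core model structure on the category $\mathbf{STRUCT}[\sigma_n]_{(d,0)}^{\widetilde{\mathcal{T}(\sigma_n)}}$ (both defined in the context), every object is both fibrant and cofibrant.
   Context: Let $\sigma=\langle R_1,\dots,R_l\rangle$ be a finite relational vocabulary, $R_i$ of arity $p_i$, and $\sigma_n$ its expansion by $n$ constant symbols; all structures are finite. For a $\sigma$-structure $\mathfrak{A}$, its Gaifman graph has vertex set $A$ and an edge between $a,b$ iff both occur in a tuple of some $R_i^{\mathfrak{A}}$; $d(\cdot,\cdot)$ is shortest-path distance, $d(\vec a,b)=\min_i d(a_i,b)$, $B_d^{\mathfrak{A}}(\vec a)=\{b: d(\vec a,b)\le d\}$, and the $d$-neighborhood $N_d^{\mathfrak{A}}(\vec a)$ is the $\sigma_n$-structure on $B_d^{\mathfrak{A}}(\vec a)$ with relations $R_i^{\mathfrak{A}}\cap B_d^{\mathfrak{A}}(\vec a)^{p_i}$ and constants $a_1,\dots,a_n$. Homomorphisms of $d$-neighborhoods are relation-preserving maps of balls sending $a_i\mapsto b_i$. $\widetilde{\mathcal{T}(\sigma_n)}$ is the $\sigma_n$-structure whose universe is the set of closed $\sigma_n$-terms (the constant symbols), constants interpreted as themselves and all relations empty. The category $\mathbf{STRUCT}[\sigma_n]_{(d,0)}^{\widetilde{\mathcal{T}(\sigma_n)}}$ has objects the $d$-neighborhoods $N_d^{\mathfrak{A}}(\vec a)$, the $0$-neighborhoods $N_0^{\mathfrak{A}}(a)$ and $\widetilde{\mathcal{T}(\sigma_n)}$;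 morphisms are homomorphisms of $d$-neighborhoods, the unique homomorphism $\widetilde{\mathcal{T}(\sigma_n)}\to N_d^{\mathfrak{A}}(\vec a)$, and the unique homomorphism $N_d^{\mathfrak{A}}(\vec a)\to N_0^{\mathfrak{A}}(a)$. The paper takes $\widetilde{\mathcal{T}(\sigma_n)}$ as initial and $N_0^{\mathfrak{A}}(a)$ as terminal object. Two objects $X,Y$ are homomorphically equivalent if there are morphisms $X\to Y$ and $Y\to X$. A retraction is a morphism $r:X\to Y$ such that $r\circ s=\mathrm{id}_Y$ for some morphism $s$. The generalized core model structure (of Droz and Zakharevich) is the model structure in which a morphism $f:X\to Y$ is a weak equivalence iff $X$ and $Y$ are homomorphically equivalent, and the acyclic fibrations are exactly the retractions (so cofibrations are the morphisms with the left lifting property with respect to all retractions, and fibrations are the morphisms with the right lifting property with respect to all acyclic cofibrations). An object is cofibrant if the map from the initial object is a cofibration and fibrant if the map to the terminal object is a fibration. *)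

(* Defs.v *)
From mathcomp Require Import all_boot.
Set Implicit Arguments. Unset Strict Implicit. Unset Printing Implicit Defensive.

Section CoreModel.
(* vocabulary sigma = <R_0,...,R_{l-1}>, R_i of arity p i; n constants; radius d *)
Variables (l : nat) (p : 'I_l -> nat) (n d : nat).

Record sstruct := SStruct {
  carrier : finType;
  rel : forall i : 'I_l, pred ((p i).-tuple carrier) }.
Arguments rel : clear implicits.

Definition gadj (A : sstruct) (x y : carrier A) : bool :=
  [exists i : 'I_l, exists t : (p i).-tuple (carrier A),
     [&& rel A i t, x \in t & y \in t]].

Fixpoint within (A : sstruct) (k : nat) (x y : carrier A) : bool :=
  if k is k'.+1 then within k' x y || [exists z, within k' x z && gadj z y]
  else x == y.

(* a pointed structure (A, a_1..a_n); it determines the d-neighborhood N_d^A(a) *)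
Record pointed := Pointed { pbase : sstruct; pts : n.-tuple (carrier pbase) }.

Definition inball (N : pointed) (x : carrier (pbase N)) : bool :=
  [exists j : 'I_n, within d (tnth (pts N) j) x].

Definition ball (N : pointed) := {x : carrier (pbase N) | inball x}.

Definition is_nhom (N M : pointed) (h : ball N -> ball M) : Prop :=
  (forall (i : 'I_l) (t : (p i).-tuple (ball N)),
     rel (pbase N) i (map_tuple val t) ->
     rel (pbase M) i (map_tuple val (map_tuple h t))) /\
  (forall (j : 'I_n) (x : ball N), val x = tnth (pts N) j ->
     val (h x) = tnth (pts M) j).

Definition nhom (N M : pointed) := {h : ball N -> ball M | is_nhom h}.

Lemma is_nhom_id (N : pointed) : is_nhom (@id (ball N)).
Proof.
split=> [i t H|j x H] //.
have E : map_tuple val (map_tuple id t) = map_tuple val t.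
  by apply: val_inj; rewrite /= map_id.
by rewrite E.
Qed.

Lemma is_nhom_comp (N M K : pointed) (g : nhom M K) (f : nhom N M) :
  is_nhom (fun x => sval g (sval f x)).
Proof.
case: g => g [g1 g2]; case: f => f [f1 f2]; split=> [i t H|j x H] /=.
- have E : map_tuple val (map_tuple (fun x => g (f x)) t) =
           map_tuple val (map_tuple g (map_tuple f t)).
    by apply: val_inj; rewrite /= -map_comp.
  by rewrite E; apply: g1; apply: f1.
- by apply: g2; apply: f2.
Qed.

Definition nhid (N : pointed) : nhom N N := exist _ id (is_nhom_id N).
Definition nhcomp (N M K : pointed) (g : nhom M K) (f : nhom N M) : nhom N K :=
  exist _ _ (is_nhom_comp g f).

(* objects of STRUCT[sigma_n]_(d,0)^T~ : the initial object T~(sigma_n),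
   the d-neighborhoods, and the terminal 0-neighborhood *)
Inductive obj := OInit | ONb of pointed | OTerm.

Definition Hom (X Y : obj) : Type :=
  match X, Y with
  | OInit, _ => unit
  | ONb N, ONb M => nhom N M
  | ONb _, OTerm => unit
  | OTerm, OTerm => unit
  | _, _ => Empty_set
  end.

Definition idm (X : obj) : Hom X X :=
  match X return Hom X X with
  | OInit => tt | ONb N => nhid N | OTerm => tt end.

Definition comp (X Y Z : obj) : Hom Y Z -> Hom X Y -> Hom X Z :=
  match X as x, Y as y, Z as z return Hom y z -> Hom x y -> Hom x z with
  | OInit, _, _ => fun _ _ => tt
  | ONb N, ONb M, ONb K => fun g f => nhcomp g f
  | ONb _, _, OTerm => fun _ _ => tt
  | OTerm, OTerm, OTerm => fun _ _ => tt
  | ONb _, OInit, _ => fun _ f => match f with end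
  | ONb _, ONb _, OInit => fun g _ => match g with end
  | ONb _, OTerm, OInit => fun g _ => match g with end
  | ONb _, OTerm, ONb _ => fun g _ => match g with end
  | OTerm, OInit, _ => fun _ f => match f with end
  | OTerm, ONb _, _ => fun _ f => match f with end
  | OTerm, OTerm, OInit => fun g _ => match g with end
  | OTerm, OTerm, ONb _ => fun g _ => match g with end
  end.

Definition from_init (X : obj) : Hom OInit X := tt.
Definition to_term (X : obj) : Hom X OTerm :=
  match X return Hom X OTerm with OInit => tt | ONb _ => tt | OTerm => tt end.

Definition hom_equiv (X Y : obj) : Prop :=
  inhabited (Hom X Y) /\ inhabited (Hom Y X).

Definition weak_equiv (X Y : obj) (f : Hom X Y) : Prop := hom_equiv X Y.

Definition retraction (X Y : obj) (r : Hom X Y) : Prop :=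
  exists s : Hom Y X, comp r s = idm Y.

Definition lifts (A B X Y : obj) (i : Hom A B) (q : Hom X Y) : Prop :=
  forall (u : Hom A X) (v : Hom B Y), comp q u = comp v i ->
    exists h : Hom B X, comp h i = u /\ comp q h = v.

Definition acyclic_fibration (X Y : obj) (r : Hom X Y) : Prop := retraction r.

Definition cofibration (A B : obj) (i : Hom A B) : Prop :=
  forall (X Y : obj) (r : Hom X Y), acyclic_fibration r -> lifts i r.

Definition acyclic_cofibration (A B : obj) (i : Hom A B) : Prop :=
  cofibration i /\ weak_equiv i.

Definition fibration (X Y : obj) (q : Hom X Y) : Prop :=
  forall (A B : obj) (i : Hom A B), acyclic_cofibration i -> lifts i q.

Definition cofibrant (X : obj) : Prop := cofibration (from_init X).
Definition fibrant (X : obj) : Prop := fibration (to_term X).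

End CoreModel.

(* Main.v *)
Require Import Defs.
From mathcomp Require Import all_boot zify.
From Stdlib Require Import ProofIrrelevance FunctionalExtensionality.
Lemma idem_pow (T : finType) (f : T -> T) :
  exists k, 0 < k /\ forall x, iter k f (iter k f x) = iter k f x.
Proof.
suff main : forall a' b' : nat, (forall x, iter a' f x = iter b' f x) -> a' < b' ->
  exists k, 0 < k /\ forall x, iter k f (iter k f x) = iter k f x.
  pose h (m : 'I_(#|{ffun T -> T}|.+1)) : {ffun T -> T} := finfun (fun x => iter m f x).
  have : ~~ injectiveb h.
    apply/negP => /injectiveP Hi; have := leq_card h Hi; rewrite card_ord.
    by move=> H; have := ltnn #|{ffun T -> T}|; rewrite [X in X = false]H.
  case/injectivePn => a [b Hab Heq].
  have E : forall x, iter a f x = iter b f x.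
    by move=> x; have := congr1 (fun g : {ffun T -> T} => g x) Heq; rewrite /h !ffunE.
  have : (nat_of_ord a) != b by [].
  case: (ltngtP a b) => H Hn.
  - exact: (main a b).
  - by apply: (main b a) => // x; rewrite E.
  - by move: Hn; rewrite ?H ?eqxx.
move=> a' b' E lt.
set q := b' - a'.
have Ht : forall t x, iter (a' + t * q) f x = iter a' f x.
  elim=> [|t IH] x; first by rewrite mul0n addn0.
  have -> : a' + t.+1 * q = b' + t * q by rewrite /q; nia.
  by rewrite iterD -E -iterD IH.
exists ((a'.+1) * q); split; first by rewrite /q; nia.
move=> x; rewrite -iterD.
have -> : a'.+1 * q + a'.+1 * q = (a'.+1 * q - a') + (a' + a'.+1 * q) by rewrite /q; nia.
rewrite iterD Ht -iterD; congr (iter _ f x); rewrite /q; nia.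
Qed.
Set Implicit Arguments. Unset Strict Implicit. Unset Printing Implicit Defensive.

Lemma within_refl l (p : 'I_l -> nat) (A : sstruct p) k (x : carrier A) : within k x x.
Proof. by elim: k => [|k IH] /=; rewrite ?eqxx ?IH. Qed.

Lemma within_S l (p : 'I_l -> nat) (A : sstruct p) k (x y : carrier A) :
  within k x y -> within k.+1 x y.
Proof. by move=> H /=; rewrite H. Qed.

Lemma within_mono l (p : 'I_l -> nat) (A : sstruct p) k k' (x y : carrier A) :
  k <= k' -> within k x y -> within k' x y.
Proof.
move=> le; elim: k' le => [|k' IH] le H.
  by move: le; rewrite leqn0 => /eqP E; rewrite -E.
case: (ltngtP k k'.+1) le => // [lt|E] _.
  by apply: within_S; apply: IH.
by rewrite -E.
Qed.

Section Dummy. End Dummy.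

Definition ptb l (p : 'I_l -> nat) n d (N : pointed p n) (j : 'I_n) : ball d N :=
  exist _ (tnth (pts N) j) (introT existsP (ex_intro _ j (within_refl _ _))).

Lemma e_pt l (p : 'I_l -> nat) n d (N : pointed p n) (e : ball d N -> ball d N)
  (He : is_nhom e) j : e (ptb d N j) = ptb d N j.
Proof. by apply: val_inj; rewrite /= (proj2 He j (ptb d N j)). Qed.

Definition QT l (p : 'I_l -> nat) n d (N : pointed p n) (e : ball d N -> ball d N)
  : finType := {x : ball d N | e x == x}.

Definition Qs l (p : 'I_l -> nat) n d (N : pointed p n) (e : ball d N -> ball d N)
  : sstruct p :=
  @SStruct l p (QT e) (fun i t => @Defs.rel _ _ (pbase N) i (map_tuple (fun y : QT e => val (val y)) t)).

Definition Qpt l (p : 'I_l -> nat) n d (N : pointed p n) (e : ball d N -> ball d N)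
  (He : is_nhom e) (j : 'I_n) : QT e :=
  exist _ (ptb d N j) (introT eqP (e_pt He j)).

Definition Qobj l (p : 'I_l -> nat) n d (N : pointed p n) (e : ball d N -> ball d N)
  (He : is_nhom e) : pointed p n :=
  @Pointed l p n (Qs e) [tuple Qpt He j | j < n].

Definition rq l (p : 'I_l -> nat) n d (N : pointed p n) (e : ball d N -> ball d N)
  (Hid : forall x, e (e x) = e x) (x : ball d N) : QT e :=
  exist _ (e x) (introT eqP (Hid x)).

Lemma path_lemma l (p : 'I_l -> nat) n d (N : pointed p n) (e : ball d N -> ball d N)
  (He : is_nhom e) (Hid : forall x, e (e x) = e x) :
  forall k, k <= d -> forall j (x : ball d N),
  within k (tnth (pts N) j) (val x) -> within (A := Qs e) k (Qpt He j) (rq Hid x).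
Proof.
elim=> [|k IH] kd j x /=.
  move/eqP=> E.
  have Ex : x = ptb d N j by apply: val_inj.
  apply/eqP; apply: val_inj => /=; rewrite Ex; exact: (esym (e_pt He j)).
case/orP => [H|].
  by rewrite IH ?H // ltnW.
case/existsP => z /andP [Hz /existsP [i /existsP [t /and3P [Rt zt xt]]]].
have inb : forall w, w \in t -> inball d w.
  move=> w wt; apply/existsP; exists j.
  apply: (within_mono (k := k.+1)) => //=.
  apply/orP; right; apply/existsP; exists z; rewrite Hz /=.
  by apply/existsP; exists i; apply/existsP; exists t; rewrite Rt zt wt.
pose tb := map_tuple (insubd x) t.
have Etb : map_tuple val tb = t.
  apply: val_inj => /=; rewrite -map_comp -[RHS]map_id. apply/eq_in_map => w wt /=.
  by rewrite insubdK //; exact: inb.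
have Rtb := proj1 He i tb; rewrite Etb in Rtb; have {Rtb} Rtb := Rtb Rt.
pose zb : ball d N := insubd x z.
have zbv : val zb = z by rewrite /zb insubdK //; exact: inb.
apply/orP; right; apply/existsP; exists (rq Hid zb).
rewrite IH ?zbv //; last exact: ltnW.
apply/existsP; exists i; apply/existsP; exists (map_tuple (rq Hid) tb).
apply/and3P; split.
- rewrite /= /Qs /=.
  have -> : map_tuple (fun y : QT e => val (val y)) (map_tuple (rq Hid) tb)
          = map_tuple val (map_tuple e tb).
    by apply: val_inj => /=; rewrite -!map_comp.
  exact: Rtb.
- apply: map_f; exact: (map_f (insubd x) zt).
- apply: map_f; have := map_f (insubd x) xt; rewrite valKd; exact.
Qed.

Lemma inball_Q l (p : 'I_l -> nat) n d (N : pointed p n) (e : ball d N -> ball d N)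
  (He : is_nhom e) (Hid : forall x, e (e x) = e x) (y : QT e) :
  inball d (N := Qobj He) y.
Proof.
have Ey : y = rq Hid (val y).
  apply: val_inj => /=; exact: (esym (eqP (valP y))).
have := valP (val y); case/existsP => j Hj.
apply/existsP; exists j; rewrite /= tnth_mktuple Ey.
exact: path_lemma.
Qed.

Lemma retract_obj l (p : 'I_l -> nat) n d (N : pointed p n) (e : ball d N -> ball d N)
  (He : is_nhom e) (Hid : forall x, e (e x) = e x) :
  exists (Q : pointed p n) (r : nhom d N Q) (s : nhom d Q N),
    (forall y, sval r (sval s y) = y) /\ (forall y, e (sval s y) = sval s y).
Proof.
pose Q := Qobj He.
pose r : ball d N -> ball d Q := fun x => exist _ (rq Hid x) (inball_Q He Hid (rq Hid x)).
pose s : ball d Q -> ball d N := fun y => val (val y).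
have Hr : is_nhom r.
  split.
  - move=> i t Rt; rewrite /= /Qs /=.
    have -> : map_tuple (fun y : QT e => val (val y)) (map_tuple val (map_tuple r t))
            = map_tuple val (map_tuple e t).
      by apply: val_inj => /=; rewrite -!map_comp.
    exact: (proj1 He).
  - move=> j x Hx; rewrite /= tnth_mktuple; apply: val_inj; apply: val_inj => /=.
    by rewrite (proj2 He j x Hx).
have Hs : is_nhom s.
  split.
  - move=> i t; rewrite /= /Qs /=.
    have -> : map_tuple (fun y : QT e => val (val y)) (map_tuple val t)
            = map_tuple val (map_tuple s t).
      by apply: val_inj => /=; rewrite -!map_comp.
    by [].
  - by move=> j y Hy; rewrite /s Hy /= tnth_mktuple.
exists Q, (exist _ r Hr), (exist _ s Hs); split => y /=.
- apply: val_inj; apply: val_inj => /=; exact: (eqP (valP (val y))).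
- exact: (eqP (valP (val y))).
Qed.

Lemma nhom_eq l (p : 'I_l -> nat) n d (N M : pointed p n) (f g : nhom d N M) :
  (forall x, sval f x = sval g x) -> f = g.
Proof.
case: f => f Hf; case: g => g Hg /= E.
have Efg : f = g by apply: FunctionalExtensionality.functional_extensionality.
subst g; f_equal; apply: proof_irrelevance.
Qed.

Lemma comp_assoc l (p : 'I_l -> nat) n d (W X Y Z : obj p n)
  (h : Hom d Y Z) (g : Hom d X Y) (f : Hom d W X) :
  Defs.comp h (Defs.comp g f) = Defs.comp (Defs.comp h g) f.
Proof.
destruct W, X, Y, Z; simpl in *; try solve [destruct f | destruct g | destruct h];
  try reflexivity; by apply: nhom_eq.
Qed.

Lemma comp_idl l (p : 'I_l -> nat) n d (X Y : obj p n) (f : Hom d X Y) :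
  Defs.comp (idm d Y) f = f.
Proof.
destruct X, Y; simpl in *; try solve [destruct f; reflexivity]; try solve [destruct f]; by apply: nhom_eq.
Qed.

Lemma comp_idr l (p : 'I_l -> nat) n d (X Y : obj p n) (f : Hom d X Y) :
  Defs.comp f (idm d X) = f.
Proof.
destruct X, Y; simpl in *; try solve [destruct f; reflexivity]; try solve [destruct f]; by apply: nhom_eq.
Qed.

Lemma is_nhom_iter l (p : 'I_l -> nat) n d (N : pointed p n) (f : nhom d N N) m :
  is_nhom (iter m (sval f)).
Proof.
elim: m => [|m IH]; first exact: is_nhom_id.
exact: (is_nhom_comp f (exist _ _ IH)).
Qed.

Definition fpow l (p : 'I_l -> nat) n d (N : pointed p n) (f : nhom d N N) m : nhom d N N :=
  exist _ _ (is_nhom_iter f m).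

Lemma key l (p : 'I_l -> nat) n d (N M : pointed p n) (i : nhom d N M) (j : nhom d M N) :
  cofibration (A := ONb N) (B := ONb M) i ->
  exists h : nhom d M N, forall x, sval h (sval i x) = x.
Proof.
move=> Hc.
pose F := nhcomp j i.
have [k [k0 Hk]] := @idem_pow _ (sval F).
pose g := nhcomp (fpow F k.-1) j.
pose e := fun x => sval g (sval i x).
have Ee : forall x, e x = iter k (sval F) x.
  by move=> x; rewrite /e /= -iterSr prednK.
have He : is_nhom e := is_nhom_comp g i.
have Hid : forall x, e (e x) = e x by move=> x; rewrite !Ee.
have [Q [r [s [Hrs Hes]]]] := retract_obj He Hid.
pose R : Hom d (ONb N) (ONb Q) := nhcomp (nhcomp r g) i.
have Hret : retraction R.
  exists (s : Hom d (ONb Q) (ONb N)); apply: nhom_eq => y /=.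
  by have := Hes y; rewrite /e /= => ->; rewrite Hrs.
have [|h [H1 _]] := Hc (ONb N) (ONb Q) R Hret (idm d (ONb N)) (nhcomp r g : Hom d (ONb M) (ONb Q)).
  by apply: nhom_eq.
exists h => x; exact: (congr1 (fun G : nhom d N N => sval G x) H1).
Qed.

Lemma init_uniq l (p : 'I_l -> nat) n d (X : obj p n) (a b : Hom d (@OInit l p n) X) : a = b.
Proof. by case: a; case: b. Qed.

Lemma term_uniq l (p : 'I_l -> nat) n d (X : obj p n) (a b : Hom d X (@OTerm l p n)) : a = b.
Proof. by destruct X; case: a; case: b. Qed.

Theorem proposition9 (l : nat) (p : 'I_l -> nat) (n d : nat)
    (X : @obj l p n) :
  @cofibrant l p n d X /\ @fibrant l p n d X.
Proof.
split.
  move=> X' Y' r [s Hs] u v _.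
  exists (Defs.comp s v); split; first exact: init_uniq.
  by rewrite comp_assoc Hs comp_idl.
move=> A B i [Hc [[_] [j]]] u v _.
suff [h Hh] : exists h : Hom d B X, Defs.comp h i = u.
  by exists h; split => //; apply: term_uniq.
destruct A, B, X; simpl in *; try solve [destruct i | destruct j | destruct u].
- by exists tt; case: u.
- by exists tt; case: u.
- by exists tt; case: u.
- have [h' Hh'] := key j Hc.
  exists (nhcomp u h'); apply: nhom_eq => x /=; by rewrite Hh'.
- by exists tt; case: u.
- by exists tt; case: u.
Qed.
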